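(* Let $(\gamma_n)$ be a sequence of positive reals satisfying conditions (C1)–(C7) below, let $\omega>0$ be fixed, and let $a_n,b_n$ be defined as below. Then $\operatorname{Im}(a_n)>|b_n|$ for all sufficiently large $n$.
   Context: Let $\Delta_n=\gamma_{n+1}-\gamma_n$, $\Delta^2_n=\Delta_{n+1}-\Delta_n$. Conditions: (C1) $\gamma_n\to\infty$; (C2) $\Delta_n\to0$; (C3) there exist $n_0,m_0$ with $\gamma_{n+m}>\gamma_n$ for all $n\ge n_0$, $m\ge m_0$; (C4) $\sum 1/\gamma_j=\infty$; (C5) some $\kappa>1$ has $\sum\gamma_j^{-\kappa}<\infty$; (C6) $\sum|\Delta_n|/\gamma_n^2<\infty$; (C7) $\sum|\Delta^2_n|/\gamma_n<\infty$. For $n\ge1$, $a_n=-\frac{\omega^2}{2\gamma_{2n-1}\gamma_{2n}}+\frac{\gamma_{2n-1}}{2\gamma_{2n}}+\frac{\gamma_{2n-2}}{2\gamma_{2n-1}}+i\left(\frac{\omega}{2\gamma_{2n-1}}+\frac{\omega\gamma_{2n-2}}{2\gamma_{2n-1}\gamma_{2n}}\right)$, $b_n=\frac{\omega^2}{2\gamma_{2n-1}\gamma_{2n}}-\frac{\gamma_{2n-1}}{2\gamma_{2n}}+\frac{\gamma_{2n-2}}{2\gamma_{2n-1}}+i\left(-\frac{\omega}{2\gamma_{2n-1}}+\frac{\omega\gamma_{2n-2}}{2\gamma_{2n-1}\gamma_{2n}}\right)$. *)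

(* Defs.v *)
From Stdlib Require Import Reals Lra.
From Coquelicot Require Import Coquelicot.
Open Scope R_scope.

Definition Delta (gamma : nat -> R) (n : nat) : R := gamma (S n) - gamma n.
Definition Delta2 (gamma : nat -> R) (n : nat) : R := Delta gamma (S n) - Delta gamma n.

Definition cond_C1 (gamma : nat -> R) : Prop := is_lim_seq gamma p_infty.
Definition cond_C2 (gamma : nat -> R) : Prop := is_lim_seq (Delta gamma) 0.
Definition cond_C3 (gamma : nat -> R) : Prop :=
  exists n0 m0 : nat, forall n m : nat, (n0 <= n)%nat -> (m0 <= m)%nat ->
    gamma (n + m)%nat > gamma n.
Definition cond_C4 (gamma : nat -> R) : Prop :=
  is_lim_seq (sum_n (fun j => / gamma j)) p_infty.
Definition cond_C5 (gamma : nat -> R) : Prop :=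
  exists kappa : R, kappa > 1 /\ ex_series (fun j => Rpower (gamma j) (- kappa)).
Definition cond_C6 (gamma : nat -> R) : Prop :=
  ex_series (fun n => Rabs (Delta gamma n) / (gamma n) ^ 2).
Definition cond_C7 (gamma : nat -> R) : Prop :=
  ex_series (fun n => Rabs (Delta2 gamma n) / gamma n).

(* a_n and b_n for n >= 1 (indices 2n-1, 2n-2 use truncated nat subtraction,
   meaningful for n >= 1) *)
Definition a_seq (gamma : nat -> R) (omega : R) (n : nat) : C :=
  let g1 := gamma (2 * n - 1)%nat in
  let g2 := gamma (2 * n)%nat in
  let g0 := gamma (2 * n - 2)%nat in
  (- omega ^ 2 / (2 * g1 * g2) + g1 / (2 * g2) + g0 / (2 * g1),
   omega / (2 * g1) + omega * g0 / (2 * g1 * g2)).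

Definition b_seq (gamma : nat -> R) (omega : R) (n : nat) : C :=
  let g1 := gamma (2 * n - 1)%nat in
  let g2 := gamma (2 * n)%nat in
  let g0 := gamma (2 * n - 2)%nat in
  (omega ^ 2 / (2 * g1 * g2) - g1 / (2 * g2) + g0 / (2 * g1),
   - omega / (2 * g1) + omega * g0 / (2 * g1 * g2)).

(* Main.v *)
Require Import Defs.
From Stdlib Require Import Reals Lra Lia Psatz.
From Coquelicot Require Import Coquelicot.
Open Scope R_scope.

Lemma core (g0 g1 g2 w dl : R) : 0 < w -> 0 < g0 -> 0 < g2 -> 0 < dl -> dl <= 1 -> dl <= w/4 ->
  w + 1/w + 1 < g1 -> Rabs (g1 - g0) <= dl -> Rabs (g2 - g1) <= dl ->
  (w^2 - g1^2 + g0*g2)^2 < 4 * w^2 * g0 * g2.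
Proof.
  intros Hw H0 H2 Hd Hd1 Hdw Hg A B.
  apply Rabs_le_between in A. apply Rabs_le_between in B.
  set (d := g1 - g0) in *. set (e := g2 - g1) in *.
  assert (E0 : g0 = g1 - d) by (unfold d; ring).
  assert (E2 : g2 = g1 + e) by (unfold e; ring).
  set (m := g1 - dl).
  assert (Hinv : w * (1/w) = 1) by (field; lra).
  assert (Hinvp : 0 < 1/w) by (apply Rdiv_lt_0_compat; lra).
  assert (Hm : 0 < m) by (unfold m; lra).
  assert (Hm0 : m <= g0) by (unfold m; lra).
  assert (Hm2 : m <= g2) by (unfold m; lra).
  assert (HX : w^2 - g1^2 + g0*g2 = w^2 + g1*(e-d) - d*e) by (rewrite E0, E2; ring).
  assert (Hed : Rabs (e - d) <= 2*dl) by (apply Rabs_le; lra).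
  assert (Hde : Rabs (d*e) <= dl*dl).
  { rewrite Rabs_mult. apply Rmult_le_compat; try apply Rabs_pos; apply Rabs_le; lra. }
  assert (Hg1 : 0 < g1) by lra.
  assert (T1 : Rabs (w^2 + g1*(e-d) - d*e) <= w^2 + g1 * (2*dl) + dl*dl).
  { unfold Rminus at 1. eapply Rle_trans. apply Rabs_triang. rewrite Rabs_Ropp.
    eapply Rle_trans. apply Rplus_le_compat_r. apply Rabs_triang.
    rewrite Rabs_mult, (Rabs_pos_eq g1) by lra. rewrite Rabs_pos_eq by nra.
    apply Rplus_le_compat; [apply Rplus_le_compat_l; apply Rmult_le_compat_l; lra| lra]. }
  assert (Hb : Rabs (w^2 - g1^2 + g0*g2) < 2*w*m).
  { rewrite HX. eapply Rle_lt_trans. apply T1. unfold m.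
    assert (g1 * (2*dl) <= g1 * (w/2)) by (apply Rmult_le_compat_l; lra).
    assert (w * g1 > w*(w + 1/w + 1)) by (apply Rmult_lt_compat_l; lra).
    nra. }
  assert (Hsq : (w^2 - g1^2 + g0*g2)^2 < (2*w*m)^2).
  { rewrite <- (pow2_abs (w^2 - g1^2 + g0*g2)). pose proof (Rabs_pos (w^2 - g1^2 + g0*g2)); nra. }
  assert (m*m <= g0*g2) by (apply Rmult_le_compat; lra).
  nra.
Qed.

Lemma fin (g0 g1 g2 w : R) : 0 < w -> 0 < g0 -> 0 < g1 -> 0 < g2 ->
  (w^2 - g1^2 + g0*g2)^2 < 4 * w^2 * g0 * g2 ->
  w / (2 * g1) + w * g0 / (2 * g1 * g2) >
  Cmod (w ^ 2 / (2 * g1 * g2) - g1 / (2 * g2) + g0 / (2 * g1),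
   - w / (2 * g1) + w * g0 / (2 * g1 * g2)).
Proof.
  intros Hw H0 H1 H2 K.
  unfold Cmod; simpl fst; simpl snd.
  set (I := w / (2 * g1) + w * g0 / (2 * g1 * g2)).
  assert (HI : 0 < I).
  { unfold I. apply Rplus_lt_0_compat; apply Rdiv_lt_0_compat; nra. }
  assert (Hk : 0 < 4 * w^2 * g0 * g2 - (w^2 - g1^2 + g0*g2)^2) by lra.
  assert (Eq : I^2 - ((w ^ 2 / (2 * g1 * g2) - g1 / (2 * g2) + g0 / (2 * g1))^2 +
     (- w / (2 * g1) + w * g0 / (2 * g1 * g2))^2) =
     (4 * w^2 * g0 * g2 - (w^2 - g1^2 + g0*g2)^2) / (4 * g1^2 * g2^2)).
  { unfold I. field. split; lra. }
  assert (P : 0 < (4 * w^2 * g0 * g2 - (w^2 - g1^2 + g0*g2)^2) / (4 * g1^2 * g2^2)).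
  { apply Rdiv_lt_0_compat; [lra|]. assert (0 < g1^2*g2^2) by (apply Rmult_lt_0_compat; apply pow_lt; lra). lra. }
  rewrite <- (sqrt_pow2 I) by lra. apply Rlt_gt. apply sqrt_lt_1_alt. split.
  - apply Rplus_le_le_0_compat; apply pow2_ge_0.
  - lra.
Qed.

Theorem corollary9 (gamma : nat -> R) (omega : R) :
  (forall n : nat, 0 < gamma n) ->
  cond_C1 gamma -> cond_C2 gamma -> cond_C3 gamma -> cond_C4 gamma -> cond_C5 gamma -> cond_C6 gamma -> cond_C7 gamma ->
  0 < omega ->
  exists N : nat, forall n : nat, (1 <= n)%nat -> (N <= n)%nat ->
    Im (a_seq gamma omega n) > Cmod (b_seq gamma omega n).
Proof.
  intros Hpos C1 C2 _ _ _ _ _ Hw.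
  assert (Hdl : 0 < Rmin 1 (omega/4)) by (apply Rmin_pos; lra).
  apply is_lim_seq_spec in C1. apply is_lim_seq_spec in C2.
  destruct (C1 (omega + 1/omega + 1)) as [N2 HN2].
  destruct (C2 (mkposreal _ Hdl)) as [N1 HN1].
  exists (N1 + N2 + 2)%nat. intros n Hn HN.
  unfold a_seq, b_seq.
  remember (2 * n - 2)%nat as k eqn:Ek.
  assert (E1 : (2 * n - 1 = S k)%nat) by lia.
  assert (E2 : (2 * n = S (S k))%nat) by lia.
  rewrite E1, E2. unfold Im; simpl snd.
  assert (Hk1 : (N1 <= k)%nat) by lia.
  assert (Hk2 : (N2 <= S k)%nat) by lia.
  apply fin; auto.
  apply core with (dl := Rmin 1 (omega/4)); auto.
  - apply Rmin_l.
  - apply Rmin_r.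
  - left. pose proof (HN1 k Hk1). simpl in H.
    unfold Delta in H. rewrite Rminus_0_r in H. exact H.
  - left. pose proof (HN1 (S k) ltac:(lia)). simpl in H.
    unfold Delta in H. rewrite Rminus_0_r in H. exact H.
Qed.
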